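(* A set $S\subseteq\mathbb{M}^\Sigma$ is a masked semilinear set if and only if there exists an automaton $\mathcal{A}$ over $\Sigma$ such that $S=\Psi(\mathfrak{J}(\mathcal{A}))$.
   Context: Automata are nondeterministic B\''uchi automata $\langle\Sigma,Q,\delta,Q_0,\alpha\rangle$ over infinite words. For $w\in\Sigma^\omega$, $\Psi(w)\in\mathbb{N}_\infty^\Sigma$ gives for each letter its number of occurrences (or $\infty$ if infinitely many); $w\sim w'$ iff $\Psi(w)=\Psi(w')$; $\mathfrak{J}(\mathcal{A})=\{w\in\Sigma^\omega:\exists w'\sim w,\ w'\in\mathfrak{L}(\mathcal{A})\}$. $\mathbb{M}^\Sigma=\mathbb{N}_\infty^\Sigma\setminus\mathbb{N}^\Sigma$. A mask is $\mathfrak{m}\in\{0,\infty\}^\Sigma\setminus\{\vec 0\}$; $\vec x\oplus\mathfrak{m}$ has coordinate $\vec x(\sigma)$ where $\mathfrak{m}(\sigma)=0$ and $\infty$ elsewhere. A masked semilinear set is $\bigcup_{\mathfrak{m}}\{\vec x\oplus\mathfrak{m}:\vec x\in S_\mathfrak{m}\}$ over all masks, with each $S_\mathfrak{m}\subseteq\mathbb{N}^\Sigma$ semilinear (possibly empty). *)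

(* Defs.v *)
From mathcomp Require Import all_boot.
Set Implicit Arguments. Unset Strict Implicit. Unset Printing Implicit Defensive.

(* N_infty := option nat, with None standing for infinity. *)
Definition ninf := option nat.

Section Defs.
Variable Sigma : finType.

Definition oword := nat -> Sigma.

Record buchi := Buchi {
  bstate : finType;
  bdelta : bstate -> Sigma -> bstate -> bool;
  binit : pred bstate;
  bacc : pred bstate }.
Arguments bdelta : clear implicits.
Arguments binit : clear implicits.
Arguments bacc : clear implicits.

Definition accepts (A : buchi) (w : oword) : Prop :=
  exists r : nat -> bstate A,
    binit A (r 0) /\ (forall i, bdelta A (r i) (w i) (r i.+1)) /\
    (forall N, exists2 i, N <= i & bacc A (r i)).

(* Parikh w v  <->  Psi(w) = v : each letter's number of occurrences (None = infinitely many). *)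
Definition Parikh (w : oword) (v : {ffun Sigma -> ninf}) : Prop :=
  forall s : Sigma,
    match v s with
    | None => forall N, exists2 i, N <= i & w i = s
    | Some n => exists N, (forall i, N <= i -> w i <> s) /\
                          count (fun i => w i == s) (iota 0 N) = n
    end.

Definition psi_equiv (w w' : oword) : Prop :=
  forall v, Parikh w v <-> Parikh w' v.

Definition inJ (A : buchi) (w : oword) : Prop :=
  exists w', psi_equiv w' w /\ accepts A w'.

Definition inM (v : {ffun Sigma -> ninf}) : Prop := exists s, v s = None.

Definition linear_set (b : {ffun Sigma -> nat}) (P : seq {ffun Sigma -> nat})
    (x : {ffun Sigma -> nat}) : Prop :=
  exists c : 'I_(size P) -> nat,
    forall s, x s = b s + \sum_(i < size P) c i * (tnth (in_tuple P) i) s.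

Definition semilinear (S : {ffun Sigma -> nat} -> Prop) : Prop :=
  exists L : seq ({ffun Sigma -> nat} * seq {ffun Sigma -> nat}),
    forall x, S x <-> exists2 bP, bP \in L & linear_set bP.1 bP.2 x.

(* masks: m s = true means the coordinate is infinity; mask must be nonzero *)
Definition is_mask (m : {ffun Sigma -> bool}) : Prop := exists s, m s.

Definition mask_add (x : {ffun Sigma -> nat}) (m : {ffun Sigma -> bool})
    : {ffun Sigma -> ninf} :=
  [ffun s => if m s then None else Some (x s)].

Definition masked_semilinear (S : {ffun Sigma -> ninf} -> Prop) : Prop :=
  exists Sm : {ffun Sigma -> bool} -> ({ffun Sigma -> nat} -> Prop),
    (forall m, semilinear (Sm m)) /\
    (forall v, S v <-> exists m, is_mask m /\ exists2 x, Sm m x & v = mask_add x m).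

End Defs.

(* Main.v *)
Require Import Defs.
From mathcomp Require Import all_boot.
From mathcomp Require Import zify.
From Stdlib Require Import Classical.
Set Implicit Arguments. Unset Strict Implicit. Unset Printing Implicit Defensive.

Section Vec.
Variable Sigma : finType.
Notation V := {ffun Sigma -> nat}.

Definition v0 : V := [ffun => 0].
Definition vadd (x y : V) : V := [ffun s => x s + y s].
Definition ve (a : Sigma) : V := [ffun s => nat_of_bool (s == a)].

Lemma vaddA x y z : vadd x (vadd y z) = vadd (vadd x y) z.
Proof. by apply/ffunP=> s; rewrite !ffunE addnA. Qed.
Lemma vaddC x y : vadd x y = vadd y x.
Proof. by apply/ffunP=> s; rewrite !ffunE addnC. Qed.
Lemma vadd0 x : vadd x v0 = x.
Proof. by apply/ffunP=> s; rewrite !ffunE addn0. Qed.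
Lemma v0add x : vadd v0 x = x.
Proof. by apply/ffunP=> s; rewrite !ffunE. Qed.
Lemma vaddCA x y z : vadd x (vadd y z) = vadd y (vadd x z).
Proof. by apply/ffunP=> s; rewrite !ffunE addnCA. Qed.

Inductive spanI (P : seq V) : V -> Prop :=
| sp0 : spanI P v0
| spS p y : p \in P -> spanI P y -> spanI P (vadd p y).

Lemma spanI_add P x y : spanI P x -> spanI P y -> spanI P (vadd x y).
Proof.
elim=> [|p x' pP _ IH] Hy; first by rewrite v0add.
by rewrite -vaddA; apply: spS => //; apply: IH.
Qed.

Lemma spanI_mono P P' y : {subset P <= P'} -> spanI P y -> spanI P' y.
Proof. move=> sub; elim=> [|p y' pP _ IH]; [exact: sp0| exact: spS (sub _ pP) IH]. Qed.

Lemma spanI_cat P1 P2 y : spanI (P1 ++ P2) y <->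
  exists y1 y2, [/\ spanI P1 y1, spanI P2 y2 & y = vadd y1 y2].
Proof.
split.
  elim=> [|p y' pP _ [y1 [y2 [H1 H2 ->]]]].
    by exists v0, v0; split; [exact: sp0|exact: sp0|rewrite vadd0].
  rewrite mem_cat in pP; case/orP: pP => pP.
    by exists (vadd p y1), y2; split => //; [exact: spS|rewrite vaddA].
  by exists y1, (vadd p y2); split => //; [exact: spS|rewrite vaddCA].
case=> y1 [y2 [H1 H2 ->]]; apply: spanI_add.
  by apply: spanI_mono H1 => z zP; rewrite mem_cat zP.
by apply: spanI_mono H2 => z zP; rewrite mem_cat zP orbT.
Qed.

Definition mylin (b : V) (P : seq V) (x : V) := exists2 y, spanI P y & x = vadd b y.

Definition vsum I (r : seq I) (F : I -> V) := \big[vadd/v0]_(i <- r) F i.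
Lemma vsumE I (r : seq I) F s : vsum r F s = \sum_(i <- r) F i s.
Proof.
rewrite /vsum; elim: r => [|a r IH]; first by rewrite !big_nil ffunE.
by rewrite !big_cons ffunE IH.
Qed.

Definition vmul (k : nat) (p : V) : V := [ffun s => k * p s].

Lemma spanI_mul P k p : p \in P -> spanI P (vmul k p).
Proof.
move=> pP; elim: k => [|k IH].
  have -> : vmul 0 p = v0 by apply/ffunP=> s; rewrite !ffunE.
  exact: sp0.
have -> : vmul k.+1 p = vadd p (vmul k p) by apply/ffunP=> s; rewrite !ffunE mulSn.
exact: spS.
Qed.

Lemma linear_setE b P x : linear_set b P x <-> mylin b P x.
Proof.
split.
  case=> c Hc; exists (vsum (index_enum 'I_(size P)) (fun i => vmul (c i) (tnth (in_tuple P) i))).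
    rewrite /vsum; apply: (big_ind (spanI P)); [exact: sp0|exact: spanI_add|].
    by move=> i _; apply: spanI_mul; apply: mem_tnth.
  by apply/ffunP=> s; rewrite Hc !ffunE vsumE; congr (_ + _); apply: eq_bigr => i _; rewrite ffunE.
case=> y Hy ->; elim: Hy => [|p y' pP _ [c Hc]].
  by exists (fun _ => 0) => s; rewrite !ffunE big1 // => i _; rewrite mul0n.
have ip : index p P < size P by rewrite index_mem.
pose i0 : 'I_(size P) := Ordinal ip.
exists (fun i => c i + (i == i0)) => s.
move: (Hc s); rewrite !ffunE => /eqP; rewrite eqn_add2l => /eqP Hc1.
rewrite Hc1; congr (_ + _).
rewrite [RHS](eq_bigr (fun i => c i * tnth (in_tuple P) i s + (i == i0) * tnth (in_tuple P) i s)); last first.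
  by move=> i _; rewrite mulnDl.
rewrite big_split /= addnC; congr (_ + _).
rewrite (bigD1 i0) //= eqxx mul1n big1 ?addn0; last by move=> i /negbTE ->.
by rewrite (tnth_nth p) /= nth_index.
Qed.

Definition slin (S : V -> Prop) := exists L : seq (V * seq V),
  forall x, S x <-> exists2 bP, bP \in L & mylin bP.1 bP.2 x.

Lemma semilinearE S : semilinear S <-> slin S.
Proof.
split=> [[L HL]|[L HL]]; exists L => x; rewrite HL;
  by split=> [[bP bPL /linear_setE H]|[bP bPL /linear_setE H]]; exists bP.
Qed.

Lemma slin_ext (A B : V -> Prop) : (forall x, A x <-> B x) -> slin A -> slin B.
Proof. by move=> AB [L HL]; exists L => x; rewrite -AB. Qed.

Lemma slin_empty : slin (fun _ => False).
Proof. by exists [::] => x; split=> // [[]]. Qed.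

Lemma slin_single b : slin (fun x => x = b).
Proof.
exists [:: (b, [::])] => x; split=> [->|[bP]].
  by exists (b, [::]); rewrite ?inE //; exists v0; [exact: sp0|rewrite vadd0].
rewrite inE => /eqP -> /= [y Hy ->].
by inversion Hy; [rewrite vadd0|].
Qed.

Lemma slin_union A B : slin A -> slin B -> slin (fun x => A x \/ B x).
Proof.
move=> [LA HA] [LB HB]; exists (LA ++ LB) => x; rewrite HA HB; split.
  by case=> [][bP bPL H]; exists bP => //; rewrite mem_cat bPL ?orbT.
by case=> bP; rewrite mem_cat => /orP[] bPL H; [left|right]; exists bP.
Qed.

Lemma slin_bigU (T : eqType) (ts : seq T) (F : T -> V -> Prop) :
  (forall t, slin (F t)) -> slin (fun x => exists2 t, t \in ts & F t x).
Proof.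
move=> HF; elim: ts => [|t ts IH].
  by apply: slin_ext slin_empty => x; split=> // [[]].
apply: slin_ext (slin_union (HF t) IH) => x; split.
  by case=> [H|[t' t'ts H]]; [exists t; rewrite ?inE ?eqxx|exists t'; rewrite // inE t'ts orbT].
by case=> t'; rewrite inE => /orP[/eqP->|t'ts] H; [left|right; exists t'].
Qed.

Definition sadd (A B : V -> Prop) x := exists a b, [/\ A a, B b & x = vadd a b].

Lemma slin_add A B : slin A -> slin B -> slin (sadd A B).
Proof.
move=> [LA HA] [LB HB].
exists [seq (vadd a.1 b.1, a.2 ++ b.2) | a <- LA, b <- LB] => x; split.
  case=> a [b [/HA [ba baL [ya Hya ->]] /HB [bb bbL [yb Hyb ->]] ->]].
  exists (vadd ba.1 bb.1, ba.2 ++ bb.2); first by apply/allpairsP; exists (ba, bb).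
  exists (vadd ya yb); first by apply/spanI_cat; exists ya, yb.
  by rewrite /= -!vaddA (vaddCA ya).
case=> bP /allpairsP [[ba bb] [baL bbL ->]] /= [y /spanI_cat [ya [yb [Hya Hyb ->]]] ->].
exists (vadd ba.1 ya), (vadd bb.1 yb); split.
- by apply/HA; exists ba => //; exists ya.
- by apply/HB; exists bb => //; exists yb.
by rewrite -!vaddA (vaddCA ya).
Qed.

Inductive starI (A : V -> Prop) : V -> Prop :=
| st0 : starI A v0
| stS a y : A a -> starI A y -> starI A (vadd a y).

Lemma starI_add A x y : starI A x -> starI A y -> starI A (vadd x y).
Proof.
elim=> [|a x' Aa _ IH] Hy; first by rewrite v0add.
by rewrite -vaddA; apply: stS => //; apply: IH.
Qed.

Lemma starI_mono (A B : V -> Prop) x : (forall a, A a -> B a) -> starI A x -> starI B x.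
Proof. move=> AB; elim=> [|a y Aa _ IH]; [exact: st0|exact: stS (AB _ Aa) IH]. Qed.

Lemma starI_in (A : V -> Prop) a : A a -> starI A a.
Proof. by move=> Aa; rewrite -(vadd0 a); apply: stS Aa (st0 _). Qed.

Lemma star_union A B x : starI (fun x => A x \/ B x) x <-> sadd (starI A) (starI B) x.
Proof.
split.
  elim=> [|a y ABa _ [x1 [x2 [H1 H2 ->]]]].
    by exists v0, v0; split; [exact: st0|exact: st0|rewrite vadd0].
  case: ABa => Ha.
    by exists (vadd a x1), x2; split => //; [exact: stS|rewrite vaddA].
  by exists x1, (vadd a x2); split => //; [exact: stS|rewrite vaddCA].
case=> x1 [x2 [H1 H2 ->]]; apply: starI_add.
  by apply: starI_mono H1 => a; left.
by apply: starI_mono H2 => a; right.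
Qed.

Lemma star_lin b P x : starI (mylin b P) x <-> x = v0 \/ mylin b (b :: P) x.
Proof.
split.
  elim=> [|a y [ya Hya ->] _ [->|[y' Hy' ->]]]; first by left.
    by right; exists ya; [apply: spanI_mono Hya => z zP; rewrite inE zP orbT|rewrite vadd0].
  right; exists (vadd b (vadd ya y')); last by rewrite -!vaddA (vaddCA ya).
  apply: spS; first by rewrite inE eqxx.
  by apply: spanI_add => //; apply: spanI_mono Hya => z zP; rewrite inE zP orbT.
case=> [->|[y Hy ->]]; first exact: st0.
have Hb : mylin b P b by exists v0; [exact: sp0|rewrite vadd0].
suff H : forall z, spanI P z -> starI (mylin b P) (vadd b (vadd y z)).
  by move: (H v0 (sp0 _)); rewrite vadd0.
elim: Hy => [|p y' pP Hy' IH] z Hz.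
  by apply: starI_in; exists z => //; rewrite v0add.
rewrite inE in pP; case/orP: pP => [/eqP->|pP].
  by rewrite -[vadd (vadd b y') z]vaddA; apply: stS Hb (IH z Hz).
by rewrite -[vadd (vadd p y') z]vaddA (vaddCA p); apply: IH; exact: spS.
Qed.


Lemma slin_lin b P : slin (mylin b P).
Proof.
exists [:: (b, P)] => x; split=> [H|[bP]]; first by exists (b, P); rewrite ?inE.
by rewrite inE => /eqP ->.
Qed.

Lemma starI_ext (A B : V -> Prop) x : (forall a, A a <-> B a) -> (starI A x <-> starI B x).
Proof. by move=> AB; split; apply: starI_mono => a /AB. Qed.

Lemma slin_star A : slin A -> slin (starI A).
Proof.
case=> L HL; apply: (slin_ext (A := starI (fun x => exists2 bP, bP \in L & mylin bP.1 bP.2 x))).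
  by move=> x; apply: starI_ext => a; rewrite HL.
elim: L {HL} => [|bP L IH].
  apply: slin_ext (slin_single v0) => x; split=> [->|]; first exact: st0.
  by case=> // a y [].
apply: (slin_ext (A := sadd (starI (mylin bP.1 bP.2)) (starI (fun x => exists2 bP, bP \in L & mylin bP.1 bP.2 x)))).
  move=> x; rewrite -star_union; apply: starI_ext => a; split.
    by case=> [H|[bP' bPL H]]; [exists bP; rewrite ?inE ?eqxx|exists bP'; rewrite // inE bPL orbT].
  by case=> bP'; rewrite inE => /orP[/eqP->|bPL] H; [left|right; exists bP'].
apply: slin_add IH; apply: (slin_ext (A := fun x => x = v0 \/ mylin bP.1 (bP.1 :: bP.2) x)).
  by move=> x; rewrite star_lin.
exact: slin_union (slin_single _) (slin_lin _ _).
Qed.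

End Vec.

Section NFA.
Variables (Sigma : finType) (Q : finType) (d : Q -> Sigma -> Q -> bool).
Notation V := {ffun Sigma -> nat}.

Inductive RK (K : seq Q) : Q -> Q -> V -> Prop :=
| RK0 i : RK K i i (v0 Sigma)
| RK1 i a j : d i a j -> RK K i j (ve a)
| RKc i k j x y : k \in K -> RK K i k x -> RK K k j y -> RK K i j (vadd x y).

Lemma RK_mono K K' i j x : {subset K <= K'} -> RK K i j x -> RK K' i j x.
Proof.
move=> sub; elim=> {i j x} [i|i a j dij|i k j x y kK _ IH1 _ IH2];
  [exact: RK0|exact: RK1|exact: RKc (sub _ kK) IH1 IH2].
Qed.

Lemma RK_nil i j x : RK [::] i j x <-> (i = j /\ x = v0 Sigma) \/ exists2 a, d i a j & x = ve a.
Proof.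
split; first by case=> [i'|i' a j' dij|] //; [left|right; exists a].
by case=> [[-> ->]|[a dij ->]]; [exact: RK0|exact: RK1].
Qed.

Section Step.
Variables (q : Q) (K : seq Q).
Definition UU i j x := RK K i j x \/
  sadd (sadd (RK K i q) (starI (RK K q q))) (RK K q j) x.

Lemma UL3 i x : UU i q x -> exists x1 s, [/\ RK K i q x1, starI (RK K q q) s & x = vadd x1 s].
Proof.
case=> [H|[z [x2 [[x1 [s [H1 Hs ->]]] H2 ->]]]].
  by exists x, (v0 _); split => //; [exact: st0|rewrite vadd0].
exists x1, (vadd s x2); split => //; last by rewrite vaddA.
by apply: starI_add Hs (starI_in H2).
Qed.

Lemma UL2 i j x1 s z : RK K i q x1 -> starI (RK K q q) s -> UU q j z -> UU i j (vadd (vadd x1 s) z).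
Proof.
move=> H1 Hs [Hz|[z' [y2 [[y1 [s' [Hy1 Hs' ->]]] Hy2 ->]]]].
  by right; exists (vadd x1 s), z; split => //; exists x1, s.
right; exists (vadd x1 (vadd s (vadd y1 s'))), y2; split => //.
  exists x1, (vadd s (vadd y1 s')); split => //.
  by apply: starI_add Hs (stS Hy1 Hs').
by rewrite !vaddA.
Qed.

Lemma UL1 i k j x y : k \in K -> RK K i k x -> UU k j y -> UU i j (vadd x y).
Proof.
move=> kK Hx [Hy|[z' [y2 [[y1 [s' [Hy1 Hs' ->]]] Hy2 ->]]]].
  by left; exact: RKc kK Hx Hy.
right; exists (vadd (vadd x y1) s'), y2; split => //; last by rewrite !vaddA.
by exists (vadd x y1), s'; split => //; exact: RKc kK Hx Hy1.
Qed.

Lemma RK_cons i j x : RK (q :: K) i j x <-> UU i j x.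
Proof.
split.
  elim=> {i j x} [i|i a j dij|i k j x y kK _ IH1 _ IH2].
  - by left; exact: RK0.
  - by left; exact: RK1.
  move: IH1 IH2; rewrite inE in kK; case/orP: kK => [/eqP ->|kK] IH1 IH2.
    by move: IH1 => /UL3 [x1 [s [H1 Hs ->]]]; apply: UL2.
  case: IH1 => [H|[z [x2 [[x1 [s [H1 Hs ->]]] H2 ->]]]]; first exact: UL1 kK H IH2.
  rewrite -vaddA; apply: UL2 => //; exact: UL1 kK H2 IH2.
have sub : {subset K <= q :: K} by move=> z zK; rewrite inE zK orbT.
have qq : q \in q :: K by rewrite inE eqxx.
case=> [H|[z [x2 [[x1 [s [H1 Hs ->]]] H2 ->]]]]; first exact: RK_mono sub H.
have Hs' : RK (q :: K) q q s.
  elim: Hs => [|a y Ha _ IH]; first exact: RK0.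
  exact: RKc qq (RK_mono sub Ha) IH.
exact: (RKc qq (RKc qq (RK_mono sub H1) Hs') (RK_mono sub H2)).
Qed.
End Step.

Lemma RK_slin K i j : slin (RK K i j).
Proof.
elim: K i j => [|q K IH] i j.
  apply: (slin_ext (A := fun x => (i = j /\ x = v0 Sigma) \/ exists2 a, a \in enum Sigma & d i a j /\ x = ve a)).
    move=> x; rewrite RK_nil; split; case=> H; try by left.
      by right; case: H => a _ [H1 H2]; exists a.
    by right; case: H => a H1 H2; exists a; rewrite ?mem_enum.
  apply: slin_union; last first.
    apply: (@slin_bigU _ _ (enum Sigma) (fun a x => d i a j /\ x = ve a)) => a.
    case: (d i a j); last by apply: slin_ext (@slin_empty Sigma) => x; split=> // [[]].
    by apply: slin_ext (slin_single (ve a)) => x; split=> [->|[]].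
  case: (boolP (i == j)) => [/eqP ij|ij].
    by apply: slin_ext (slin_single (v0 Sigma)) => x; split=> [->|[]].
  by apply: slin_ext (@slin_empty Sigma) => x; split=> // [[eij]]; rewrite eij eqxx in ij.
apply: slin_ext (fun x => iff_sym (RK_cons q K i j x)) _.
apply: slin_union (IH i j) _.
apply: slin_add; last exact: IH.
apply: slin_add; first exact: IH.
exact: slin_star.
Qed.

End NFA.

Section Runs.
Variable Sigma : finType.
Notation V := {ffun Sigma -> nat}.

Definition cnt (u : nat -> Sigma) n : V := [ffun s => count (fun t => u t == s) (iota 0 n)].

Lemma cnt0 u : cnt u 0 = v0 Sigma.
Proof. by apply/ffunP=> s; rewrite !ffunE. Qed.

Lemma cntS u n : cnt u n.+1 = vadd (cnt u n) (ve (u n)).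
Proof.
apply/ffunP=> s; rewrite !ffunE -addn1 iotaD count_cat /= addn0 eq_sym.
by case: (s == u n).
Qed.

Definition catw (T : Type) n (u z : nat -> T) := fun t => if t < n then u t else z (t - n).

Lemma catw_lt T n (u z : nat -> T) t : t < n -> catw n u z t = u t.
Proof. by rewrite /catw => ->. Qed.
Lemma catw_ge T n (u z : nat -> T) k : catw n u z (n + k) = z k.
Proof. by rewrite /catw ltnNge leq_addr /= addKn. Qed.

Lemma cnt_cat n u z k : cnt (catw n u z) (n + k) = vadd (cnt u n) (cnt z k).
Proof.
apply/ffunP=> s; rewrite !ffunE iotaD count_cat; congr (_ + _).
  by apply: eq_in_count => t; rewrite mem_iota /= add0n => tn; rewrite catw_lt.
have -> : iota n k = map (addn n) (iota 0 k) by rewrite -iotaDl addn0.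
by rewrite ?add0n count_map; apply: eq_count => t /=; rewrite catw_ge.
Qed.

Lemma cnt_stable (w : nat -> Sigma) s a b :
  (forall i, a <= i -> w i <> s) -> a <= b -> cnt w b s = cnt w a s.
Proof.
move=> H /subnKC <-; elim: (b - a) => [|k IH]; first by rewrite addn0.
have Hk : w (a + k) <> s by apply: H; rewrite leq_addr.
rewrite addnS cntS ffunE IH ffunE.
rewrite ffunE; move/eqP: Hk; rewrite eq_sym => /negbTE ->; by rewrite addn0.
Qed.

Lemma parikh_uniq (w : nat -> Sigma) (v1 v2 : {ffun Sigma -> ninf}) : Parikh w v1 -> Parikh w v2 -> v1 = v2.
Proof.
move=> H1 H2; apply/ffunP=> s; move: (H1 s) (H2 s).
case: (v1 s) => [n1|]; case: (v2 s) => [n2|] //.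
- case=> N1 [HN1 C1] [N2 [HN2 C2]].
  have : cnt w (maxn N1 N2) s = cnt w N1 s by apply: cnt_stable HN1 (leq_maxl _ _).
  have : cnt w (maxn N1 N2) s = cnt w N2 s by apply: cnt_stable HN2 (leq_maxr _ _).
  by rewrite !ffunE C1 C2 => -> ->.
- by case=> N [HN _] /(_ N) [i /HN].
- by move=> H [N [HN _]]; case: (H N) => i /HN.
Qed.
End Runs.

Section Buchi.
Variables (Sigma : finType) (A : buchi Sigma).
Notation V := {ffun Sigma -> nat}.
Notation Q := (bstate A).
Notation d := (@bdelta Sigma A).

Definition fin_run (i j : Q) (x : V) := exists n (u : nat -> Sigma) (rr : nat -> Q),
  [/\ rr 0 = i, rr n = j, (forall t, t < n -> d (rr t) (u t) (rr t.+1)) & cnt u n = x].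

Lemma RK_fin (a0 : Sigma) K i j x : RK d K i j x -> fin_run i j x.
Proof.
elim=> {i j x} [i|i a j dij|i k j x y _ _ [n1 [u1 [r1 [a1 b1 c1 e1]]]] _ [n2 [u2 [r2 [a2 b2 c2 e2]]]]].
- by exists 0, (fun _ => a0), (fun _ => i); split => //; rewrite cnt0.
- exists 1, (fun _ => a), (fun t => if t == 0 then i else j); split => //.
    by case.
  by rewrite cntS cnt0 v0add.
exists (n1 + n2), (catw n1 u1 u2), (catw n1 r1 r2); split.
- rewrite /catw; case: ifP => // /negbT; rewrite lt0n negbK => /eqP n10.
  by rewrite n10 a2 -b1 n10 a1.
- by rewrite catw_ge.
- move=> t tn; case: (ltnP t n1) => tn1.
    rewrite [catw n1 u1 u2 t]catw_lt // [catw n1 r1 r2 t]catw_lt //.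
    case: (ltnP t.+1 n1) => t1; first by rewrite catw_lt //; apply: c1.
    have et : t.+1 = n1 by apply/eqP; rewrite eqn_leq t1 tn1.
    have -> : catw n1 r1 r2 t.+1 = r1 t.+1 by rewrite /catw et ltnn subnn a2 b1.
    exact: c1.
  move: tn; rewrite -(subnKC tn1) ltn_add2l => tn.
  rewrite -addnS !catw_ge; exact: c2.
- by rewrite cnt_cat e1 e2.
Qed.

Lemma run_cat n1 n2 (u1 u2 : nat -> Sigma) (r1 r2 : nat -> Q) :
  (forall t, t < n1 -> d (r1 t) (u1 t) (r1 t.+1)) -> r1 n1 = r2 0 ->
  (forall t, t < n2 -> d (r2 t) (u2 t) (r2 t.+1)) ->
  forall t, t < n1 + n2 -> d (catw n1 r1 r2 t) (catw n1 u1 u2 t) (catw n1 r1 r2 t.+1).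
Proof.
move=> c1 b1 c2 t tn; case: (ltnP t n1) => tn1.
  rewrite [catw n1 u1 u2 t]catw_lt // [catw n1 r1 r2 t]catw_lt //.
  case: (ltnP t.+1 n1) => t1; first by rewrite catw_lt //; apply: c1.
  have et : t.+1 = n1 by apply/eqP; rewrite eqn_leq t1 tn1.
  have -> : catw n1 r1 r2 t.+1 = r1 t.+1 by rewrite /catw et ltnn subnn b1.
  exact: c1.
move: tn; rewrite -(subnKC tn1) ltn_add2l => tn.
rewrite -addnS !catw_ge; exact: c2.
Qed.

Lemma run_cat0 n1 (r1 r2 : nat -> Q) : r1 n1 = r2 0 -> catw n1 r1 r2 0 = r1 0.
Proof.
rewrite /catw; case: ifP => // /negbT; rewrite lt0n negbK => /eqP n10.
by rewrite n10.
Qed.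

Lemma fin_RK i j x : fin_run i j x -> RK d (enum Q) i j x.
Proof.
case=> n [u [rr [<- <- c <-]]].
suff : forall m, m <= n -> RK d (enum Q) (rr 0) (rr m) (cnt u m) by apply.
elim=> [|m IH] mn; first by rewrite cnt0; exact: RK0.
rewrite cntS; apply: RKc (IH (ltnW mn)) (RK1 _ (c _ mn)).
by rewrite mem_enum.
Qed.

Definition inf_run (m : {ffun Sigma -> bool}) p := exists (z : nat -> Sigma) (rr : nat -> Q),
 [/\ rr 0 = p, forall i, d (rr i) (z i) (rr i.+1), forall N, exists2 i, N <= i & @bacc Sigma A (rr i),
     forall i, m (z i) & forall s, m s -> forall N, exists2 i, N <= i & z i = s].

Lemma combine i p x m : @binit Sigma A i -> RK d (enum Q) i p x -> inf_run m p ->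
  exists w, accepts A w /\ Parikh w (mask_add x m).
Proof.
move=> Hi HR [z [r2 [a2 c2 acc2 mz zs]]].
have [n [u [r1 [a1 b1 c1 e1]]]] := RK_fin (z 0) HR.
exists (catw n u z); split.
  exists (catw n r1 r2); split; [|split].
  - by rewrite run_cat0 ?a1 // b1 a2.
  - move=> t; apply: (run_cat (n2 := t.+1)) => //; first by rewrite b1 a2.
    by rewrite addnS ltnS leq_addl.
  move=> N; have [k Nk Hk] := acc2 N; exists (n + k); first by apply: leq_trans Nk (leq_addl _ _).
  by rewrite catw_ge.
move=> s; rewrite ffunE; case: ifP => ms.
  move=> N; have [k Nk Hk] := zs s ms N; exists (n + k); last by rewrite catw_ge.
  by apply: leq_trans Nk (leq_addl _ _).
exists n; split.
  move=> t nt; rewrite -(subnKC nt) catw_ge => zt.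
  by move: (mz (t - n)); rewrite zt ms.
have := cnt_cat n u z 0; rewrite addn0 cnt0 vadd0 e1 => H.
by rewrite -H ffunE.
Qed.


Lemma decompose (w : oword Sigma) v : accepts A w -> Parikh w v ->
  exists i p x, [/\ @binit Sigma A i, RK d (enum Q) i p x,
     inf_run [ffun s => v s == None] p & v = mask_add x [ffun s => v s == None]].
Proof.
case=> rr [r0 [rd racc]] Hp.
have [f Hf] : exists f : Sigma -> nat, forall s, match v s with None => True
   | Some n => (forall i, f s <= i -> w i <> s) /\ count (fun i => w i == s) (iota 0 (f s)) = n end.
  have H : forall s, exists N, match v s with None => True
   | Some n => (forall i, N <= i -> w i <> s) /\ count (fun i => w i == s) (iota 0 N) = n end.
    by move=> s; move: (Hp s); case: (v s) => [n [N [H1 H2]]|_]; [exists N|exists 0].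
  by case/fin_all_exists: H => f Hf; exists f.
pose N := \max_s f s.
have fN s : f s <= N by apply: leq_bigmax.
exists (rr 0), (rr N), (cnt w N); split => //.
- by apply: fin_RK; exists N, w, rr; split.
- exists (fun i => w (N + i)), (fun i => rr (N + i)); split.
  + by rewrite addn0.
  + by move=> i; rewrite addnS; apply: rd.
  + move=> M; have [i Mi Hi] := racc (N + M); exists (i - N); first by lia.
    by rewrite subnKC //; lia.
  + move=> i; rewrite ffunE; move: (Hf (w (N+i))); case E: (v (w (N+i))) => [n|] // [H1 _].
    by exfalso; apply: (H1 (N+i)) => //; apply: leq_trans (fN _) (leq_addr _ _).
  + move=> s; rewrite ffunE => /eqP vs M; move: (Hp s); rewrite vs => /(_ (N + M)) [i Hi ws].
    by exists (i - N); [lia| rewrite subnKC ?ws //; lia].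
apply/ffunP => s; rewrite !ffunE; move: (Hf s); case: (v s) => [n [H1 H2]|] //=.
by move: (cnt_stable H1 (fN s)); rewrite !ffunE H2 => ->.
Qed.

End Buchi.

Lemma dir_back (Sigma : finType) (S : {ffun Sigma -> ninf} -> Prop)
  (HS : forall v, S v -> inM v) (A : buchi Sigma) :
  (forall v, S v <-> exists w : oword Sigma, inJ A w /\ Parikh w v) -> masked_semilinear S.
Proof.
move=> HA.
exists (fun m x => exists i p, [/\ @binit Sigma A i, inf_run m p & RK (@bdelta Sigma A) (enum (bstate A)) i p x]).
split.
  move=> m; apply/semilinearE.
  pose F (ip : bstate A * bstate A) x := [/\ @binit Sigma A ip.1, inf_run m ip.2 & RK (@bdelta Sigma A) (enum (bstate A)) ip.1 ip.2 x].
  have := @slin_bigU _ _ (enum (@predT (prod (bstate A) (bstate A)))) F.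
  move=> Hb; apply: slin_ext (Hb _).
    move=> x; split; first by case=> [[i p]] _ H; exists i, p.
    by case=> i [p H]; exists (i, p); rewrite ?mem_enum.
  move=> [i p].
  case: (classic (@binit Sigma A i /\ inf_run m p)) => [[Hi Hp]|Hn].
    apply: slin_ext (RK_slin (@bdelta Sigma A) (enum (bstate A)) i p) => x.
    by split; [move=> H; split|case].
  by apply: slin_ext (@slin_empty Sigma) => x; split => // [[Hi Hp _]]; apply: Hn.
move=> v; split.
  move=> Sv; have [s vs] := HS _ Sv.
  move: Sv; rewrite HA => [[w [[w' [Heq Hacc]] Hp]]].
  have Hp' : Parikh w' v by apply/Heq.
  have [i [p [x [Hi HR Hinf ->]]]] := decompose Hacc Hp'.
  exists [ffun s => v s == None]; split; first by exists s; rewrite ffunE vs.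
  by exists x => //; exists i, p.
case=> m [[s ms] [x [i [p [Hi Hinf HR]]] ->]].
have [w [Hacc Hp]] := combine Hi HR Hinf.
by apply/HA; exists w; split => //; exists w; split.
Qed.

Section Cyc.
Variable T : eqType.

Lemma next_iter_mem (c : seq T) x k : x \in c -> iter k (next c) x \in c.
Proof. by move=> xc; elim: k => //= k IH; rewrite mem_next. Qed.

Lemma next_nth_mod (y0 : T) c' i : uniq (y0 :: c') -> i < size (y0 :: c') ->
  next (y0 :: c') (nth y0 (y0 :: c') i) = nth y0 (y0 :: c') (i.+1 %% size (y0 :: c')).
Proof.
move=> u ic; rewrite next_nth mem_nth // index_uniq //.
move: ic; rewrite /= ltnS leq_eqVlt => /orP[/eqP ->|ic'].
  by rewrite modnn nth_default.
by rewrite modn_small.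
Qed.

Lemma iter_next_nth (y0 : T) c' i k : uniq (y0 :: c') -> i < size (y0 :: c') ->
  iter k (next (y0 :: c')) (nth y0 (y0 :: c') i) = nth y0 (y0 :: c') ((i + k) %% size (y0 :: c')).
Proof.
move=> u ic; elim: k => [|k IH]; first by rewrite addn0 modn_small.
rewrite iterS IH next_nth_mod //; last by rewrite ltn_mod.
by rewrite -addn1 modnDml addn1 addnS.
Qed.

Lemma next_iter_all (c : seq T) x y N : uniq c -> x \in c -> y \in c ->
  exists2 k, N <= k & iter k (next c) x = y.
Proof.
case: c => [//|y0 c'] u xc yc.
set n := size (y0 :: c').
have ix : index x (y0 :: c') < n by rewrite index_mem.
have iy : index y (y0 :: c') < n by rewrite index_mem.
exists (N * n + (index y (y0 :: c') + n - index x (y0 :: c'))).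
  apply: leq_trans (leq_addr _ _); apply: leq_pmulr; exact: leq_ltn_trans (leq0n _) ix.
rewrite -[X in iter _ _ X](nth_index y0 xc) iter_next_nth //.
have -> : index x (y0 :: c') + (N * n + (index y (y0 :: c') + n - index x (y0 :: c')))
   = (N.+1) * n + index y (y0 :: c') by lia.
by rewrite modnMDl modn_small // nth_index.
Qed.
End Cyc.

Section Construct.
Variable Sigma : finType.
Notation V := {ffun Sigma -> nat}.
Variable Lf : {ffun Sigma -> bool} -> seq (V * seq V).

Definition Cfg := ({ffun Sigma -> bool} * (V * seq V))%type.
Definition G : seq Cfg :=
  [seq (m, bP) | m <- filter (fun m : {ffun Sigma -> bool} => [exists s, m s]) (enum (@predT {ffun Sigma -> bool})), bP <- Lf m].
Definition nG := size G.
Definition dflt : Cfg := ([ffun => false], (v0 Sigma, [::])).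
Definition cf (j : 'I_nG) := nth dflt G j.
Definition allv := flatten [seq c.2.1 :: c.2.2 | c <- G].
Definition vmax (x : V) := \max_(s : Sigma) x s.
Definition Bd := \max_(x <- allv) vmax x.
Definition Ctr := {ffun Sigma -> 'I_Bd.+1}.
Definition rv (r : Ctr) : V := [ffun s => val (r s)].
Definition tob (x : V) : Ctr := [ffun s => inord (x s)].

Lemma rv_tob (x : V) : (forall s, x s <= Bd) -> rv (tob x) = x.
Proof. by move=> H; apply/ffunP=> s; rewrite !ffunE; apply: inordK; rewrite ltnS. Qed.

Lemma allv_le (j : 'I_nG) x s : x \in (cf j).2.1 :: (cf j).2.2 -> x s <= Bd.
Proof.
move=> xin.
have xa : x \in allv.
  apply/flattenP; exists ((cf j).2.1 :: (cf j).2.2) => //.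
  by apply/mapP; exists (cf j) => //; apply: mem_nth.
apply: leq_trans (leq_bigmax_seq x xa isT).
exact: (@leq_bigmax _ (fun s => x s) s).
Qed.

Local Notation St := (('I_nG * Ctr) + ('I_nG * Sigma))%type.
Definition cyc (j : 'I_nG) := [seq s <- enum (@predT Sigma) | (cf j).1 s].

Lemma cyc_uniq j : uniq (cyc j).
Proof. by rewrite filter_uniq // enum_uniq. Qed.
Lemma mem_cyc j s : (s \in cyc j) = (cf j).1 s.
Proof. by rewrite mem_filter mem_enum andbT. Qed.

Definition cdelta (q : St) (a : Sigma) (q' : St) : bool :=
  match q, q' with
  | inl (j, r), inl (j', r') => (j == j') && ((vadd (rv r') (ve a) == rv r) ||
        has (fun p => vadd (rv r') (ve a) == vadd (rv r) p) (cf j).2.2)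
  | inl (j, r), inr (j', t) => [&& j == j', rv r == v0 Sigma, (cf j).1 a & t == next (cyc j) a]
  | inr (j, t), inr (j', t') => [&& j == j', a == t & t' == next (cyc j) t]
  | inr _, inl _ => false
  end.
Definition cinit (q : St) : bool := if q is inl (j, r) then rv r == (cf j).2.1 else false.
Definition cacc (q : St) : bool := if q is inr _ then true else false.
Definition Aut : buchi Sigma := @Buchi Sigma St cdelta cinit cacc.


Local Notation dA := (@bdelta Sigma Aut).
Local Notation KA := (enum (bstate Aut)).
Definition z0 : Ctr := tob (v0 Sigma).
Lemma rv_z0 : rv z0 = v0 Sigma.
Proof. by rewrite rv_tob // => s; rewrite ffunE. Qed.
Lemma inKA (q : bstate Aut) : q \in KA.
Proof. by rewrite mem_enum. Qed.

Lemma sum_vadd (x y : V) : \sum_s vadd x y s = \sum_s x s + \sum_s y s.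
Proof. by rewrite -big_split; apply: eq_bigr => s _; rewrite ffunE. Qed.
Lemma sum_ve (a : Sigma) : \sum_s ve a s = 1.
Proof.
rewrite (bigD1 a) //= ffunE eqxx big1 // => s /negbTE; rewrite ffunE => ->.
by [].
Qed.

Lemma consume j n : forall r : Ctr, \sum_s rv r s <= n -> RK dA KA (inl (j, r)) (inl (j, z0)) (rv r).
Proof.
elim: n => [|n IH] r rn; case: (pickP (fun s => 0 < rv r s)) => [s rs|H0].
- by move: rn; rewrite (bigD1 s) //= leqn0 addn_eq0 => /andP[/eqP rs0]; rewrite rs0 in rs.
- have -> : r = z0.
    apply/ffunP=> s; apply: val_inj; move: (H0 s); rewrite /z0 /tob !ffunE /= inordK //.
    by case: (r s) => [[|k] ?].
  rewrite rv_z0; exact: RK0.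
- pose r' : Ctr := [ffun t => if t == s then inord (rv r s).-1 else r t].
  have Hrr : vadd (rv r') (ve s) = rv r.
    apply/ffunP=> t; rewrite !ffunE; case: eqP => [->|_]; last by rewrite addn0.
    move: rs; rewrite ffunE => rs.
    rewrite /= inordK; first by rewrite addn1 prednK.
    by apply: leq_ltn_trans (leq_pred _) (ltn_ord _).
  have tr : dA (inl (j, r)) s (inl (j, r')) by rewrite /= eqxx Hrr eqxx.
  rewrite -Hrr vaddC; apply: RKc (inKA (inl (j, r'))) (RK1 _ tr) (IH _ _).
  by move: rn; rewrite -Hrr sum_vadd sum_ve addn1.
- have -> : r = z0.
    apply/ffunP=> s; apply: val_inj; move: (H0 s); rewrite /z0 /tob !ffunE /= inordK //.
    by case: (r s) => [[|k] ?].
  rewrite rv_z0; exact: RK0.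
Qed.

Lemma gen j p : p \in (cf j).2.2 -> RK dA KA (inl (j, z0)) (inl (j, z0)) p.
Proof.
move=> pP; case: (pickP (fun s => 0 < p s)) => [s ps|H0]; last first.
  have -> : p = v0 Sigma by apply/ffunP=> s; move: (H0 s); rewrite ffunE; case: (p s).
  exact: RK0.
have pb t : p t <= Bd by apply: (allv_le (j := j)); rewrite inE pP orbT.
pose r' : Ctr := tob [ffun t => p t - (t == s)].
have Hr' : rv r' = [ffun t => p t - (t == s)].
  by rewrite rv_tob // => t; rewrite ffunE; apply: leq_trans (leq_subr _ _) (pb t).
have Hrr : vadd (rv r') (ve s) = p.
  apply/ffunP=> t; rewrite Hr' !ffunE; case: eqP => [->|_]; last by rewrite subn0 addn0.
  by rewrite subnK.
have tr : dA (inl (j, z0)) s (inl (j, r')).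
  rewrite /= eqxx /=; apply/orP; right; apply/hasP; exists p => //.
  by rewrite rv_z0 v0add Hrr.
rewrite -Hrr vaddC; apply: RKc (inKA (inl (j, r'))) (RK1 _ tr) (consume _ (leqnn _)).
Qed.

Lemma span_run j y : spanI (cf j).2.2 y -> RK dA KA (inl (j, z0)) (inl (j, z0)) y.
Proof.
elim=> [|p y' pP _ IH]; first exact: RK0.
exact: RKc (inKA (inl (j, z0))) (gen pP) IH.
Qed.

Lemma tail_run j s0 : (cf j).1 s0 -> inf_run (A := Aut) (cf j).1 (inl (j, z0)).
Proof.
move=> ms0; have s0c : s0 \in cyc j by rewrite mem_cyc.
exists (fun k => iter k (next (cyc j)) s0),
  (fun k => if k is k'.+1 then inr (j, iter k (next (cyc j)) s0) else inl (j, z0) : bstate Aut).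
split => //.
- case=> [|i]; first by rewrite /= eqxx rv_z0 eqxx ms0 eqxx.
  by rewrite /= !eqxx.
- by move=> N; exists N.+1.
- by move=> i; rewrite -mem_cyc; apply: next_iter_mem.
by move=> s ms N; apply: next_iter_all; rewrite ?cyc_uniq ?mem_cyc.
Qed.

Lemma fwd_a v : (exists m, is_mask m /\ exists2 x, (exists2 bP, bP \in Lf m & mylin bP.1 bP.2 x) & v = mask_add x m)
  -> exists w : oword Sigma, inJ Aut w /\ Parikh w v.
Proof.
case=> m [[s0 ms0] [x [bP bPL [y Hy ->]] ->]].
have inG : (m, bP) \in G.
  apply/allpairsPdep; exists m, bP; split => //.
  by rewrite mem_filter mem_enum andbT; apply/existsP; exists s0.
have jl : index (m, bP) G < nG by rewrite index_mem.
pose j := Ordinal jl.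
have cfj : cf j = (m, bP) by rewrite /cf /= nth_index.
have bb : rv (tob bP.1) = bP.1.
  by rewrite rv_tob // => s; apply: (allv_le (j := j)); rewrite cfj inE eqxx.
have HR : RK dA KA (inl (j, tob bP.1)) (inl (j, z0)) (vadd bP.1 y).
  apply: RKc (inKA (inl (j, z0))) _ _; first by rewrite -{2}bb; apply: consume (leqnn _).
  by apply: span_run; rewrite cfj.
have Hi : @binit Sigma Aut (inl (j, tob bP.1)) by rewrite /= bb cfj eqxx.
have Hinf : inf_run (A := Aut) m (inl (j, z0)).
  by move: (tail_run (j := j) (s0 := s0)); rewrite cfj; apply.
have [w [Hacc Hp]] := combine Hi HR Hinf.
by exists w; split => //; exists w; split.
Qed.


Lemma fwd_b (w : oword Sigma) v : inJ Aut w -> Parikh w v ->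
  exists m, is_mask m /\ exists2 x, (exists2 bP, bP \in Lf m & mylin bP.1 bP.2 x) & v = mask_add x m.
Proof.
case=> w' [Heq [rr [r0 [rd racc]]]] Hp0.
have Hp : Parikh w' v by apply/Heq.
clear Heq Hp0 w.
have ex : exists t, cacc (rr t) by case: (racc 0) => i _ Hi; exists i.
pose T := ex_minn ex.
have [HT Tmin] : cacc (rr T) /\ forall t, cacc (rr t) -> T <= t.
  by rewrite /T; case: ex_minnP.
case E0 : (rr 0) r0 => [[j0 b0]|] //= Hb0.
have inv : forall t, t < T -> exists r y, [/\ rr t = inl (j0, r), spanI (cf j0).2.2 y &
    vadd (cnt w' t) (rv r) = vadd (cf j0).2.1 y].
  elim=> [|t IH] tT.
    exists b0, (v0 Sigma); split => //; first exact: sp0.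
    by rewrite cnt0 v0add vadd0; apply/eqP.
  have [r [y [Et Hy Hc]]] := IH (ltnW tT).
  case Et1 : (rr t.+1) => [[j' r']|[j' t']]; last first.
    by move: (Tmin t.+1); rewrite Et1 => /(_ isT); rewrite leqNgt tT.
  move: (rd t); rewrite Et Et1 /= => /andP[/eqP <- /orP[/eqP H|/hasP[p pP /eqP H]]].
    exists r', y; split => //.
    apply/ffunP=> s; move/ffunP/(_ s): H; move/ffunP/(_ s): Hc; rewrite cntS !ffunE; lia.
  exists r', (vadd p y); split => //; first exact: spS.
  apply/ffunP=> s; move/ffunP/(_ s): H; move/ffunP/(_ s): Hc; rewrite cntS !ffunE; lia.
have T0 : 0 < T by move: HT; case: (posnP T) => // ->; rewrite E0.
have [r [y [Et Hy Hc]]] : exists r y, [/\ rr T.-1 = inl (j0, r), spanI (cf j0).2.2 y &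
    vadd (cnt w' T.-1) (rv r) = vadd (cf j0).2.1 y] by apply: inv; rewrite ltn_predL.
case ET : (rr T) HT => [//|[j1 tt]] _.
move: (rd T.-1); rewrite Et prednK // ET /= => /and4P[/eqP ej ez ma /eqP ett].
subst j1.
set c := cyc j0.
set m := (cf j0).1.
have ac : w' T.-1 \in c by rewrite mem_cyc.
have ttc : tt \in c by rewrite ett mem_next.
have tail : forall k, rr (T + k) = inr (j0, iter k (next c) tt) /\ w' (T + k) = iter k (next c) tt.
  suff H : forall k, rr (T + k) = inr (j0, iter k (next c) tt).
    move=> k; split => //; move: (rd (T + k)); rewrite H -addnS H /=.
    by case/and3P => _ /eqP.
  elim=> [|k IH]; first by rewrite addn0.
  move: (rd (T + k)); rewrite IH -addnS.
  case: (rr (T + k.+1)) => [//|[j' t']] /= /and3P[/eqP <- _ /eqP ->].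
  by [].
have cG : cf j0 \in G by apply: mem_nth.
case/allpairsPdep: cG => m' [bP [m'in bPL ecf]].
have mm : m' = m by rewrite /m ecf.
have bb : bP = (cf j0).2 by rewrite ecf.
exists m; split.
  by rewrite -mm; move: m'in; rewrite mem_filter => /andP[/existsP [s ms] _]; exists s.
exists (vadd (cf j0).2.1 y).
  exists bP; first by rewrite -mm.
  by rewrite bb; exists y.
apply: (parikh_uniq Hp) => s; rewrite ffunE.
case: ifP => ms.
  have sc : s \in c by rewrite mem_cyc.
  move=> N; have [k Nk Hk] := next_iter_all N (cyc_uniq j0) ttc sc.
  by exists (T + k); [apply: leq_trans Nk (leq_addl _ _)|rewrite (tail k).2].
exists T; split.
  move=> i Ti; rewrite -(subnKC Ti) (tail _).2 => Hs.
  by move: (next_iter_mem (i - T) ttc); rewrite Hs mem_cyc -/m ms.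
have wa : w' T.-1 != s by apply/eqP => Hs; move: ma; rewrite Hs -/m ms.
move/ffunP/(_ s): Hc; move/eqP/ffunP/(_ s): ez.
have cT : cnt w' T = vadd (cnt w' T.-1) (ve (w' T.-1)) by rewrite -cntS prednK.
move/ffunP/(_ s): cT; rewrite !ffunE eq_sym (negbTE wa) => -> H1 H2.
lia.
Qed.

End Construct.

Theorem theorem1 (Sigma : finType) (S : {ffun Sigma -> ninf} -> Prop)
  (HS : forall v, S v -> inM v) :
  masked_semilinear S <->
  exists A : buchi Sigma,
    forall v, S v <-> exists w : oword Sigma, inJ A w /\ Parikh w v.
Proof.
split; last by case=> A HA; exact: (@dir_back Sigma S HS A HA).
case=> Sm [Hsl HSm].
have H : forall m : {ffun Sigma -> bool}, exists L : seq ({ffun Sigma -> nat} * seq {ffun Sigma -> nat}), forall x, Sm m x <-> exists2 bP, bP \in L & mylin bP.1 bP.2 x.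
  by move=> m; case: (semilinearE (Sm m)) => H1 _; exact: H1 (Hsl m).
case/fin_all_exists: H => Lf HLf.
exists (Aut Lf) => v; split.
  move/HSm => [m [mm [x Hx ->]]]; apply: fwd_a; exists m; split => //.
  by exists x => //; apply/HLf.
case=> w [HJ Hp]; apply/HSm; have [m [mm [x Hx ->]]] := fwd_b HJ Hp.
by exists m; split => //; exists x => //; apply/HLf.
Qed.
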